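(* Let $f\in\mathcal A_C$ and $g\in\mathcal{BV}$. Then: (a) $f*g(x)=\int_{-\infty}^\infty f(x-y)g(y)\,dy$ exists for every $x\in\mathbb R$; (b) $f*g=g*f$, i.e. $\int_{-\infty}^\infty f(x-y)g(y)\,dy=\int_{-\infty}^\infty f(y)g(x-y)\,dy$ for all $x\in\mathbb R$; (c) $\|f*g\|_\infty\le \left|\int_{-\infty}^\infty f\right|\inf_{\mathbb R}|g|+\|f\|\,Vg\le \|f\|\,\|g\|_{\mathcal{BV}}$; (d) $f*g\in C^0(\overline{\mathbb R})$ and $\lim_{x\to\pm\infty}f*g(x)=g(\pm\infty)\int_{-\infty}^\infty f$; (f) for all $x,z\in\mathbb R$, $\tau_z(f*g)(x)=(\tau_zf)*g(x)=f*(\tau_zg)(x)$.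
   Context: Notation: $\mathcal D=C_c^\infty(\mathbb R)$ (test functions), $\mathcal D'$ the Schwartz distributions; derivatives of distributions are distributional derivatives. $\overline{\mathbb R}=[-\infty,\infty]$ and $F(\pm\infty)=\lim_{x\to\pm\infty}F(x)$. $C^0(\overline{\mathbb R})$ is the set of continuous $F:\mathbb R\to\mathbb R$ having finite limits at $\pm\infty$; $\|F\|_\infty=\sup_{\mathbb R}|F|$. $\mathcal B_C=\{F\in C^0(\overline{\mathbb R}):F(-\infty)=0\}$. $\mathcal A_C=\{f\in\mathcal D': f=F' \text{ for some } F\in\mathcal B_C\}$; the primitive $F\in\mathcal B_C$ of $f$ is unique, and the continuous primitive integral is $\int_a^bf=F(b)-F(a)$ for $a,b\in\overline{\mathbb R}$. The Alexiewicz norm is $\|f\|=\sup_I|\int_If|$, the supremum over all intervals $I\subset\mathbb R$. A function in $L^1$ is identified with the distribution it defines. $\mathcal{BV}$ is the set of $g:\mathbb R\to\mathbb R$ with finite variation $Vg=\sup\sum_i|g(x_i)-g(y_i)|$ (supremum over finite families of disjoint intervals $(x_i,y_i)$); such $g$ have limits $g(\pm\infty)$, and $\|g\|_{\mathcal{BV}}=|g(-\infty)|+Vg$. For $h\in\mathcal A_C$ with primitive $H$ and $g\in\mathcal{BV}$ the integral of the product is defined by $\int_{-\infty}^\infty hg=H(\infty)g(\infty)-\int_{-\infty}^\infty H\,dg$ (Henstock–Stieltjes integral). For $f\in\mathcal A_C$ with primitive $F$ and $x\in\mathbb R$, $f(x-\cdot)$ denotes the element of $\mathcal A_C$ with primitive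 $y\mapsto F(\infty)-F(x-y)$, and for $g\in\mathcal{BV}$ the convolution is $f*g(x)=\int_{-\infty}^\infty f(x-y)g(y)\,dy$, the product integral of $f(x-\cdot)$ and $g$; $g*f(x)=\int_{-\infty}^\infty f(y)g(x-y)\,dy$ is the product integral of $f$ and $y\mapsto g(x-y)$. Translations: for a function $\phi$, $\tau_z\phi(y)=\phi(y-z)$; for $f\in\mathcal A_C$ with primitive $F$, $\tau_zf$ is the element of $\mathcal A_C$ with primitive $F(\cdot-z)$ (equivalently $\langle\tau_zf,\phi\rangle=\langle f,\tau_{-z}\phi\rangle$). *)

(* Defs.v *)
From Stdlib Require Import Reals Lra List ClassicalEpsilon.
Import ListNotations.
Open Scope R_scope.

Definition tends_pinf (f : R -> R) (L : R) : Prop :=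
  forall eps, 0 < eps -> exists M, forall x, M < x -> Rabs (f x - L) < eps.
Definition tends_minf (f : R -> R) (L : R) : Prop :=
  forall eps, 0 < eps -> exists M, forall x, x < M -> Rabs (f x - L) < eps.

(* F(+oo), F(-oo) (meaningful when the limits exist) *)
Definition lim_pinf (f : R -> R) : R := epsilon (inhabits 0) (fun L => tends_pinf f L).
Definition lim_minf (f : R -> R) : R := epsilon (inhabits 0) (fun L => tends_minf f L).

(* supremum / infimum of a set of reals (meaningful when they exist) *)
Definition sup_R (P : R -> Prop) : R := epsilon (inhabits 0) (fun s => is_lub P s).
Definition inf_R (P : R -> Prop) : R := - sup_R (fun y => P (- y)).

(* F in B_C : continuous on R, finite limits at +/- oo, F(-oo) = 0.
   An element f of A_C is represented by its (unique) primitive F in B_C. *)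
Definition in_BC (F : R -> R) : Prop :=
  continuity F /\ tends_minf F 0 /\ exists L, tends_pinf F L.

Inductive ERbar : Type := Fin (r : R) | PInf | MInf.
Definition ext (F : R -> R) (e : ERbar) : R :=
  match e with Fin r => F r | PInf => lim_pinf F | MInf => lim_minf F end.
Definition ERle (a b : ERbar) : Prop :=
  match a, b with
  | MInf, _ => True | _, PInf => True
  | Fin x, Fin y => x <= y
  | _, _ => False end.

(* Alexiewicz norm ||f|| = sup_I |int_I f|, I over all intervals of R,
   int_I f = F(b) - F(a) for I with endpoints a <= b in [-oo,oo]. *)
Definition alex_norm (F : R -> R) : R :=
  sup_R (fun v => exists a b : ERbar, ERle a b /\ v = Rabs (ext F b - ext F a)).

Definition disj_int (p q : R * R) : Prop := snd p <= fst q \/ snd q <= fst p.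
Definition var_sum (g : R -> R) (l : list (R * R)) : R :=
  fold_right (fun p s => Rabs (g (fst p) - g (snd p)) + s) 0 l.
Definition variation_set (g : R -> R) (v : R) : Prop :=
  exists l : list (R * R),
    Forall (fun p => fst p < snd p) l /\ ForallOrdPairs disj_int l /\ v = var_sum g l.
Definition BV (g : R -> R) : Prop :=
  exists M, forall v, variation_set g v -> v <= M.
Definition Var (g : R -> R) : R := sup_R (variation_set g).
Definition BV_norm (g : R -> R) : R := Rabs (lim_minf g) + Var g.

(* A delta-fine tagged division of [a,b]: list of (tag t_i, right endpoint x_i),
   consecutive intervals [x_{i-1}, x_i] with x_0 = a, last x_n = b,
   x_{i-1} <= t_i <= x_i, and [x_{i-1},x_i] inside (t_i - delta t_i, t_i + delta t_i). *)
Fixpoint fine_div (delta : R -> R) (a b : R) (l : list (R * R)) : Prop :=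
  match l with
  | [] => a = b
  | (t, x) :: l' =>
      a < x /\ a <= t <= x /\ t - delta t < a /\ x < t + delta t /\ fine_div delta x b l'
  end.

Fixpoint st_sum (H g : R -> R) (a : R) (l : list (R * R)) : R :=
  match l with
  | [] => 0
  | (t, x) :: l' => H t * (g x - g a) + st_sum H g x l'
  end.

Definition HS_int_ab (H g : R -> R) (a b I : R) : Prop :=
  forall eps, 0 < eps ->
    exists delta : R -> R, (forall x, 0 < delta x) /\
      forall l, fine_div delta a b l -> Rabs (st_sum H g a l - I) < eps.

(* Henstock-Stieltjes integral of H dg over [-oo,oo] equals I
   (as the limit of the integrals over [a,b], a -> -oo, b -> oo; Hake) *)
Definition HS_int (H g : R -> R) (I : R) : Prop :=
  forall eps, 0 < eps -> exists M, forall a b, a < - M -> M < b ->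
    exists J, HS_int_ab H g a b J /\ Rabs (J - I) < eps.

Definition HS_integral (H g : R -> R) : R := epsilon (inhabits 0) (fun I => HS_int H g I).

(* integral of the product h g, h in A_C with primitive H, g in BV:
   int h g = H(oo) g(oo) - int H dg *)
Definition prod_int (H g : R -> R) : R := lim_pinf H * lim_pinf g - HS_integral H g.

(* f*g(x) = int f(x-.) g, where f(x-.) has primitive y |-> F(oo) - F(x-y) *)
Definition conv (F g : R -> R) (x : R) : R :=
  prod_int (fun y => lim_pinf F - F (x - y)) g.
(* g*f(x) = int f(y) g(x-y) dy *)
Definition conv_r (F g : R -> R) (x : R) : R :=
  prod_int F (fun y => g (x - y)).

Definition sup_norm (h : R -> R) : R := sup_R (fun v => exists x, v = Rabs (h x)).

(* Main.v *)
Require Import Defs.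
From Stdlib Require Import Reals Lra Lia List ClassicalEpsilon FunctionalExtensionality Classical.
Import ListNotations.
Open Scope R_scope.

Lemma le_eps (x y : R) : (forall e, 0 < e -> x <= y + e) -> x <= y.
Proof.
  intros H. destruct (Rle_dec x y) as [|Hn]; auto.
  specialize (H ((x - y)/2)). lra.
Qed.

Lemma tends_pinf_unique f L1 L2 : tends_pinf f L1 -> tends_pinf f L2 -> L1 = L2.
Proof.
  intros H1 H2. apply Rle_antisym; apply le_eps; intros e He;
  destruct (H1 (e/2)) as [M1 HM1]; try lra; destruct (H2 (e/2)) as [M2 HM2]; try lra;
  specialize (HM1 (Rmax M1 M2 + 1)); specialize (HM2 (Rmax M1 M2 + 1));
  assert (M1 < Rmax M1 M2 + 1) by (pose proof (Rmax_l M1 M2); lra);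
  assert (M2 < Rmax M1 M2 + 1) by (pose proof (Rmax_r M1 M2); lra);
  specialize (HM1 ltac:(assumption)); specialize (HM2 ltac:(assumption));
  apply Rabs_def2 in HM1; apply Rabs_def2 in HM2; lra.
Qed.

Lemma tends_minf_unique f L1 L2 : tends_minf f L1 -> tends_minf f L2 -> L1 = L2.
Proof.
  intros H1 H2. apply Rle_antisym; apply le_eps; intros e He;
  destruct (H1 (e/2)) as [M1 HM1]; try lra; destruct (H2 (e/2)) as [M2 HM2]; try lra;
  specialize (HM1 (Rmin M1 M2 - 1)); specialize (HM2 (Rmin M1 M2 - 1));
  assert (Rmin M1 M2 - 1 < M1) by (pose proof (Rmin_l M1 M2); lra);
  assert (Rmin M1 M2 - 1 < M2) by (pose proof (Rmin_r M1 M2); lra);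
  specialize (HM1 ltac:(assumption)); specialize (HM2 ltac:(assumption));
  apply Rabs_def2 in HM1; apply Rabs_def2 in HM2; lra.
Qed.

Lemma lim_pinf_eq f L : tends_pinf f L -> lim_pinf f = L.
Proof.
  intro H. apply (tends_pinf_unique f); [|exact H].
  unfold lim_pinf. apply epsilon_spec. eauto.
Qed.

Lemma lim_minf_eq f L : tends_minf f L -> lim_minf f = L.
Proof.
  intro H. apply (tends_minf_unique f); [|exact H].
  unfold lim_minf. apply epsilon_spec. eauto.
Qed.

Lemma sup_R_spec (P : R -> Prop) : (exists x, P x) -> (exists M, forall x, P x -> x <= M) ->
  is_lub P (sup_R P).
Proof.
  intros Hne Hb. unfold sup_R. apply epsilon_spec.
  destruct (completeness P) as [m Hm].
  - destruct Hb as [M HM]. exists M. intros x Hx. apply HM. exact Hx.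
  - exact Hne.
  - eauto.
Qed.

Lemma lub_approx (P : R -> Prop) s e : is_lub P s -> 0 < e -> exists v, P v /\ s - e < v.
Proof.
  intros [Hu Hl] He. destruct (classic (exists v, P v /\ s - e < v)) as [|Hn]; auto.
  exfalso. assert (s <= s - e); [|lra]. apply Hl. intros v Hv.
  destruct (Rle_dec v (s - e)) as [|Hv']; auto. exfalso; apply Hn; exists v; split; auto; lra.
Qed.

Lemma eps_N (e : R) : 0 < e -> exists N, forall n, (N <= n)%nat -> / (INR n + 1) < e.
Proof.
  intros He. destruct (INR_unbounded (/ e)) as [N HN]. exists N. intros n Hn.
  apply le_INR in Hn. pose proof (pos_INR n).
  assert (Hp : 0 < / e) by (apply Rinv_0_lt_compat; lra).
  replace e with (/ / e) by (field; lra).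
  apply Rinv_lt_contravar; [ nra | lra ].
Qed.

Lemma Rabs_le_inv a b : Rabs a <= b -> - b <= a <= b.
Proof. unfold Rabs; destruct (Rcase_abs a); intros; lra. Qed.

Lemma eq_eps x y : (forall e, 0 < e -> Rabs (x - y) <= 2 * e) -> x = y.
Proof.
  intros H. apply Rle_antisym; apply le_eps; intros e He; specialize (H (e/2) ltac:(lra));
  apply Rabs_le_inv in H; lra.
Qed.
Fixpoint pv (g : R -> R) (a : R) (p : list R) : R :=
  match p with [] => 0 | x :: p' => Rabs (g x - g a) + pv g x p' end.
Fixpoint chain (a b : R) (p : list R) : Prop :=
  match p with [] => a = b | x :: p' => a < x /\ chain x b p' end.
Fixpoint pairs (a : R) (p : list R) : list (R * R) :=
  match p with [] => [] | x :: p' => (a, x) :: pairs x p' end.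

Lemma chain_le a b p : chain a b p -> a <= b.
Proof.
  revert a; induction p as [|x p IH]; simpl; intros a H; [lra|].
  destruct H as [H1 H2]. specialize (IH _ H2). lra.
Qed.

Lemma pv_nonneg g a p : 0 <= pv g a p.
Proof.
  revert a; induction p as [|x p IH]; simpl; intros a; [lra|].
  pose proof (Rabs_pos (g x - g a)). specialize (IH x). lra.
Qed.

Lemma var_sum_pairs g a p : var_sum g (pairs a p) = pv g a p.
Proof.
  revert a; induction p as [|x p IH]; simpl; intros a; auto.
  rewrite IH, Rabs_minus_sym. reflexivity.
Qed.

Lemma var_sum_app g l1 l2 : var_sum g (l1 ++ l2) = var_sum g l1 + var_sum g l2.
Proof.
  induction l1 as [|q l1 IH]; simpl; [lra|]. rewrite IH. lra.
Qed.

Lemma pairs_in a b p : chain a b p ->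
  Forall (fun q => a <= fst q /\ snd q <= b /\ fst q < snd q) (pairs a p).
Proof.
  revert a; induction p as [|x p IH]; simpl; intros a H; constructor.
  - destruct H as [H1 H2]. pose proof (chain_le _ _ _ H2). simpl. lra.
  - destruct H as [H1 H2]. specialize (IH _ H2).
    eapply Forall_impl; [|exact IH]. simpl. intros q Hq. lra.
Qed.

Lemma pairs_disj a b p : chain a b p -> ForallOrdPairs disj_int (pairs a p).
Proof.
  revert a; induction p as [|x p IH]; simpl; intros a H; constructor.
  - destruct H as [H1 H2]. pose proof (pairs_in _ _ _ H2) as Hin.
    eapply Forall_impl; [|exact Hin]. intros q Hq. unfold disj_int. simpl. lra.
  - destruct H as [H1 H2]. apply IH; auto.
Qed.

Lemma FOP_app {A} (Rl : A -> A -> Prop) l1 l2 :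
  ForallOrdPairs Rl l1 -> ForallOrdPairs Rl l2 ->
  (forall x y, In x l1 -> In y l2 -> Rl x y) -> ForallOrdPairs Rl (l1 ++ l2).
Proof.
  induction 1 as [|a l1 Ha Hl1 IH]; simpl; intros H2 Hc; auto.
  constructor.
  - apply Forall_app. split; auto. apply Forall_forall. intros y Hy. apply Hc; simpl; auto.
  - apply IH; auto.
Qed.

Definition valid (l : list (R * R)) :=
  Forall (fun p => fst p < snd p) l /\ ForallOrdPairs disj_int l.

Lemma valid_pairs a b p : chain a b p -> valid (pairs a p).
Proof.
  intros H. split; [|apply (pairs_disj _ _ _ H)].
  eapply Forall_impl; [|exact (pairs_in _ _ _ H)]. simpl; intros; lra.
Qed.

Lemma valid_app l1 l2 : valid l1 -> valid l2 ->
  (forall x y, In x l1 -> In y l2 -> snd x <= fst y) -> valid (l1 ++ l2).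
Proof.
  intros [H1 H1'] [H2 H2'] Hc. split.
  - apply Forall_app; auto.
  - apply FOP_app; auto. intros x y Hx Hy. left. apply Hc; auto.
Qed.

Lemma var_le_Var g l : BV g -> valid l -> var_sum g l <= Var g.
Proof.
  intros [M HM] [H1 H2]. unfold Var.
  assert (Hl : is_lub (variation_set g) (sup_R (variation_set g))).
  { apply sup_R_spec. exists 0. exists []. repeat split; constructor.
    exists M. exact HM. }
  apply Hl. exists l. auto.
Qed.

Lemma Var_nonneg g : BV g -> 0 <= Var g.
Proof.
  intros Hg. change 0 with (var_sum g []). apply var_le_Var; auto. split; constructor.
Qed.

Lemma pv2_le_Var g a1 b1 p1 a2 b2 p2 : BV g -> chain a1 b1 p1 -> chain a2 b2 p2 -> b1 <= a2 ->
  pv g a1 p1 + pv g a2 p2 <= Var g.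
Proof.
  intros Hg H1 H2 H12. rewrite <- !var_sum_pairs, <- var_sum_app.
  apply var_le_Var; auto. apply valid_app; try (eapply valid_pairs; eauto).
  intros x y Hx Hy.
  pose proof (proj1 (Forall_forall _ _) (pairs_in _ _ _ H1) x Hx).
  pose proof (proj1 (Forall_forall _ _) (pairs_in _ _ _ H2) y Hy). lra.
Qed.

Lemma pv_le_Var g a b p : BV g -> chain a b p -> pv g a p <= Var g.
Proof.
  intros Hg H. pose proof (pv2_le_Var g a b p b b [] Hg H eq_refl (Rle_refl b)). simpl in H0. lra.
Qed.

Lemma list_bound (l : list (R * R)) : exists T, forall q, In q l -> Rabs (fst q) <= T /\ Rabs (snd q) <= T.
Proof.
  induction l as [|q l [T HT]]; simpl.
  - exists 0. intros q [].
  - exists (Rmax (Rmax (Rabs (fst q)) (Rabs (snd q))) T). intros q' [<-|Hq'].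
    + pose proof (Rmax_l (Rmax (Rabs (fst q)) (Rabs (snd q))) T).
      pose proof (Rmax_l (Rabs (fst q)) (Rabs (snd q))).
      pose proof (Rmax_r (Rabs (fst q)) (Rabs (snd q))). lra.
    + specialize (HT q' Hq'). pose proof (Rmax_r (Rmax (Rabs (fst q)) (Rabs (snd q))) T). lra.
Qed.

Lemma tail_var g e : BV g -> 0 < e -> exists T,
  (forall a b p, chain a b p -> T <= a -> pv g a p <= e) /\
  (forall a b p, chain a b p -> b <= - T -> pv g a p <= e).
Proof.
  intros Hg He.
  assert (Hl : is_lub (variation_set g) (Var g)).
  { destruct Hg as [M HM]. apply sup_R_spec. exists 0. exists []. repeat split; constructor.
    exists M. exact HM. }
  destruct (lub_approx _ _ _ Hl He) as [v [[l [Hl1 [Hl2 ->]]] Hv]].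
  destruct (list_bound l) as [T HT]. exists T. split.
  - intros a b p Hc Ha.
    assert (var_sum g (l ++ pairs a p) <= Var g).
    { apply var_le_Var; auto. apply valid_app; [split; auto | eapply valid_pairs; eauto |].
      intros x y Hx Hy. specialize (HT x Hx).
      pose proof (proj1 (Forall_forall _ _) (pairs_in _ _ _ Hc) y Hy).
      destruct HT as [_ HT]. pose proof (Rle_abs (snd x)). lra. }
    rewrite var_sum_app, var_sum_pairs in H. lra.
  - intros a b p Hc Hb.
    assert (var_sum g (pairs a p ++ l) <= Var g).
    { apply var_le_Var; auto. apply valid_app; [eapply valid_pairs; eauto | split; auto |].
      intros x y Hx Hy. specialize (HT y Hy).
      pose proof (proj1 (Forall_forall _ _) (pairs_in _ _ _ Hc) x Hx).
      destruct HT as [HT _].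
      assert (- fst y <= Rabs (fst y)) by (rewrite <- Rabs_Ropp; apply Rle_abs). lra. }
    rewrite var_sum_app, var_sum_pairs in H. lra.
Qed.
Lemma cauchy_pinf (f : R -> R) :
  (forall e, 0 < e -> exists T, forall x y, T <= x -> T <= y -> Rabs (f x - f y) <= e) ->
  exists L, tends_pinf f L.
Proof.
  intros Hc.
  assert (Hcc : Cauchy_crit (fun n => f (INR n))).
  { intros e He. destruct (Hc (e/2)) as [T HT]; [lra|].
    destruct (INR_unbounded T) as [N HN]. exists N. intros n m Hn Hm.
    apply le_INR in Hn; apply le_INR in Hm. unfold Rdist.
    specialize (HT (INR n) (INR m)). assert (Rabs (f (INR n) - f (INR m)) <= e/2) by (apply HT; lra).
    lra. }
  destruct (R_complete _ Hcc) as [L HL]. exists L.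
  intros e He. destruct (Hc (e/2)) as [T HT]; [lra|].
  destruct (HL (e/2)) as [N1 HN1]; [lra|].
  destruct (INR_unbounded T) as [N2 HN2].
  exists T. intros x Hx.
  specialize (HN1 (max N1 N2) (Nat.le_max_l _ _)). unfold Rdist in HN1.
  pose proof (le_INR _ _ (Nat.le_max_r N1 N2)).
  specialize (HT x (INR (max N1 N2)) ltac:(lra) ltac:(lra)).
  apply Rabs_def2 in HN1. apply Rabs_le_inv in HT. apply Rabs_def1; lra.
Qed.

Lemma cauchy_minf (f : R -> R) :
  (forall e, 0 < e -> exists T, forall x y, x <= - T -> y <= - T -> Rabs (f x - f y) <= e) ->
  exists L, tends_minf f L.
Proof.
  intros Hc. destruct (cauchy_pinf (fun x => f (- x))) as [L HL].
  { intros e He. destruct (Hc e He) as [T HT]. exists T. intros x y Hx Hy. apply HT; lra. }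
  exists L. intros e He. destruct (HL e He) as [M HM]. exists (- M). intros x Hx.
  replace x with (- - x) by ring. apply HM. lra.
Qed.

Lemma BV_tends g : BV g -> tends_pinf g (lim_pinf g) /\ tends_minf g (lim_minf g).
Proof.
  intros Hg. split.
  - destruct (cauchy_pinf g) as [L HL].
    + intros e He. destruct (tail_var g e Hg He) as [T [HT _]]. exists T. intros x y Hx Hy.
      destruct (Rtotal_order x y) as [Hxy|[->|Hxy]].
      * specialize (HT x y [y] ltac:(simpl; lra) Hx). simpl in HT. rewrite Rabs_minus_sym. lra.
      * rewrite Rminus_diag, Rabs_R0. lra.
      * specialize (HT y x [x] ltac:(simpl; lra) Hy). simpl in HT. lra.
    + rewrite (lim_pinf_eq _ _ HL). exact HL.
  - destruct (cauchy_minf g) as [L HL].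
    + intros e He. destruct (tail_var g e Hg He) as [T [_ HT]]. exists T. intros x y Hx Hy.
      destruct (Rtotal_order x y) as [Hxy|[->|Hxy]].
      * specialize (HT x y [y] ltac:(simpl; lra) Hy). simpl in HT. rewrite Rabs_minus_sym. lra.
      * rewrite Rminus_diag, Rabs_R0. lra.
      * specialize (HT y x [x] ltac:(simpl; lra) Hx). simpl in HT. lra.
    + rewrite (lim_minf_eq _ _ HL). exact HL.
Qed.
Fixpoint endp (a : R) (l : list (R * R)) : R :=
  match l with [] => a | (t, x) :: l' => endp x l' end.

Lemma endp_app a l1 l2 : endp a (l1 ++ l2) = endp (endp a l1) l2.
Proof. revert a; induction l1 as [|[t x] l1 IH]; simpl; auto. Qed.

Lemma fine_endp d a b l : fine_div d a b l -> endp a l = b.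
Proof.
  revert a; induction l as [|[t x] l IH]; simpl; intros a H; auto. apply IH; tauto.
Qed.

Lemma fine_le d a b l : fine_div d a b l -> a <= b.
Proof.
  revert a; induction l as [|[t x] l IH]; simpl; intros a H; [lra|].
  destruct H as [H1 [_ [_ [_ H2]]]]. specialize (IH _ H2). lra.
Qed.

Lemma fine_mono (d1 d2 : R -> R) a b l : (forall x, d1 x <= d2 x) ->
  fine_div d1 a b l -> fine_div d2 a b l.
Proof.
  intros Hd. revert a; induction l as [|[t x] l IH]; simpl; intros a H; auto.
  destruct H as [H1 [H2 [H3 [H4 H5]]]]. specialize (Hd t).
  repeat split; try lra. apply IH; auto.
Qed.

Lemma fine_app d a c b l1 l2 : fine_div d a c l1 -> fine_div d c b l2 -> fine_div d a b (l1 ++ l2).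
Proof.
  revert a; induction l1 as [|[t x] l1 IH]; simpl; intros a H1 H2.
  - subst; auto.
  - destruct H1 as [? [? [? [? ?]]]]. split; [auto|]. split; [auto|]. split; [auto|]. split; [auto|]. eapply IH; eauto.
Qed.

Lemma fine_chain d a b l : fine_div d a b l -> chain a b (map snd l).
Proof.
  revert a; induction l as [|[t x] l IH]; simpl; intros a H; auto.
  destruct H as [? [? [? [? ?]]]]. split; auto.
Qed.

Lemma st_sum_app H g a l1 l2 : st_sum H g a (l1 ++ l2) = st_sum H g a l1 + st_sum H g (endp a l1) l2.
Proof.
  revert a; induction l1 as [|[t x] l1 IH]; simpl; intros a; [lra|]. rewrite IH. lra.
Qed.

Lemma st_sum_lin H g c a l : st_sum (fun t => c - H t) g a l = c * (g (endp a l) - g a) - st_sum H g a l.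
Proof.
  revert a; induction l as [|[t x] l IH]; simpl; intros a; [ring|]. rewrite IH. ring.
Qed.

Lemma st_sum_sub H1 H2 g a l : st_sum H1 g a l - st_sum H2 g a l = st_sum (fun t => H1 t - H2 t) g a l.
Proof.
  revert a; induction l as [|[t x] l IH]; simpl; intros a; [ring|]. rewrite <- IH. ring.
Qed.

Lemma st_bound H g d a b l B : fine_div d a b l -> (forall t, a <= t <= b -> Rabs (H t) <= B) ->
  Rabs (st_sum H g a l) <= B * pv g a (map snd l).
Proof.
  revert a; induction l as [|[t x] l IH]; simpl; intros a Hf HB.
  - rewrite Rabs_R0. lra.
  - destruct Hf as [H1 [H2 [H3 [H4 H5]]]]. pose proof (fine_le _ _ _ _ H5).
    assert (IH' := IH x H5 ltac:(intros; apply HB; lra)).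
    assert (Rabs (H t) <= B) by (apply HB; lra).
    eapply Rle_trans; [apply Rabs_triang|]. rewrite Rabs_mult.
    assert (Rabs (H t) * Rabs (g x - g a) <= B * Rabs (g x - g a)).
    { apply Rmult_le_compat_r; auto. apply Rabs_pos. }
    lra.
Qed.

Lemma cousin (d : R -> R) a b : (forall x, 0 < d x) -> a <= b -> exists l, fine_div d a b l.
Proof.
  intros Hd Hab.
  set (E := fun x => a <= x <= b /\ exists l, fine_div d a x l).
  assert (HE : exists x, E x) by (exists a; split; [lra | exists []; simpl; auto]).
  assert (Hb : bound E) by (exists b; intros x [Hx _]; lra).
  destruct (completeness E Hb HE) as [c [Hcu Hcl]].
  assert (Hac : a <= c) by (apply Hcu; split; [lra | exists []; simpl; auto]).
  assert (Hcb : c <= b) by (apply Hcl; intros x [Hx _]; lra).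
  assert (Hc : exists l, fine_div d a c l).
  { destruct (classic (exists x, E x /\ c - d c < x)) as [[x [[Hx [l Hl]] Hxc]]|Hn].
    - assert (x <= c) by (apply Hcu; split; eauto).
      destruct (Req_dec x c) as [->|Hne]; [eauto|].
      exists (l ++ [(c, c)]). eapply fine_app; [exact Hl|]. simpl.
      specialize (Hd c). repeat split; lra.
    - exfalso. assert (c <= c - d c); [|specialize (Hd c); lra].
      apply Hcl. intros x Hx. destruct (Rle_dec x (c - d c)) as [|Hx']; auto.
      exfalso; apply Hn; exists x; split; auto; lra. }
  destruct (Req_dec c b) as [<-|Hne]; auto.
  exfalso. destruct Hc as [l Hl].
  set (c' := Rmin b (c + d c / 2)).
  assert (Hc1 : c < c').
  { unfold c'. apply Rmin_glb_lt; specialize (Hd c); lra. }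
  assert (Hc2 : c' <= c + d c / 2) by apply Rmin_r.
  assert (Hc3 : c' <= b) by apply Rmin_l.
  assert (E c').
  { split; [lra|]. exists (l ++ [(c, c')]). eapply fine_app; [exact Hl|]. simpl.
    specialize (Hd c). repeat split; lra. }
  specialize (Hcu c' H). lra.
Qed.

Lemma HS_ab_unique H g a b J1 J2 : a <= b -> HS_int_ab H g a b J1 -> HS_int_ab H g a b J2 -> J1 = J2.
Proof.
  intros Hab H1 H2.
  assert (forall e, 0 < e -> Rabs (J1 - J2) <= 2 * e).
  { intros e He. destruct (H1 e He) as [d1 [Hd1 Hl1]]. destruct (H2 e He) as [d2 [Hd2 Hl2]].
    destruct (cousin (fun x => Rmin (d1 x) (d2 x)) a b) as [l Hl]; auto.
    { intros x. apply Rmin_glb_lt; auto. }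
    specialize (Hl1 l (fine_mono _ _ _ _ _ (fun x => Rmin_l _ _) Hl)).
    specialize (Hl2 l (fine_mono _ _ _ _ _ (fun x => Rmin_r _ _) Hl)).
    apply Rabs_def2 in Hl1; apply Rabs_def2 in Hl2. apply Rabs_le. lra. }
  apply eq_eps; auto.
Qed.

Lemma HS_int_unique H g I1 I2 : HS_int H g I1 -> HS_int H g I2 -> I1 = I2.
Proof.
  intros H1 H2.
  assert (forall e, 0 < e -> Rabs (I1 - I2) <= 2 * e).
  { intros e He. destruct (H1 e He) as [M1 HM1]. destruct (H2 e He) as [M2 HM2].
    set (T := Rabs M1 + Rabs M2 + 1).
    pose proof (Rle_abs M1). pose proof (Rle_abs M2).
    assert (-M1 <= Rabs M1) by (rewrite <- Rabs_Ropp; apply Rle_abs).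
    assert (-M2 <= Rabs M2) by (rewrite <- Rabs_Ropp; apply Rle_abs).
    destruct (HM1 (- T) T ltac:(unfold T; lra) ltac:(unfold T; lra)) as [J1 [HJ1 HJ1']].
    destruct (HM2 (- T) T ltac:(unfold T; lra) ltac:(unfold T; lra)) as [J2 [HJ2 HJ2']].
    assert (J1 = J2).
    { apply (HS_ab_unique H g (-T) T J1 J2); auto.
      unfold T; pose proof (Rabs_pos M1); pose proof (Rabs_pos M2); lra. }
    subst. apply Rabs_def2 in HJ1'; apply Rabs_def2 in HJ2'. apply Rabs_le. lra. }
  apply eq_eps; auto.
Qed.

Lemma HS_integral_eq H g I : HS_int H g I -> HS_integral H g = I.
Proof.
  intros HI. apply (HS_int_unique H g); auto. unfold HS_integral. apply epsilon_spec. eauto.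
Qed.
Fixpoint Dl (dn : nat -> R -> R) (n : nat) : R -> R :=
  match n with O => dn O | S k => fun x => Rmin (Dl dn k x) (dn (S k) x) end.

Lemma Dl_pos dn n x : (forall k x, 0 < dn k x) -> 0 < Dl dn n x.
Proof.
  intros Hp. induction n as [|n IH]; simpl; auto. apply Rmin_glb_lt; auto.
Qed.

Lemma Dl_le dn n k x : (k <= n)%nat -> Dl dn n x <= dn k x.
Proof.
  induction n as [|n IH]; intros Hk.
  - inversion Hk; subst; simpl; lra.
  - destruct (Nat.eq_dec k (S n)) as [->|Hne]; simpl; [apply Rmin_r|].
    eapply Rle_trans; [apply Rmin_l|]. apply IH; lia.
Qed.

Lemma HS_ab_cauchy H g a b : a <= b ->
  (forall e, 0 < e -> exists d : R -> R, (forall x, 0 < d x) /\ forall l1 l2,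
     fine_div d a b l1 -> fine_div d a b l2 -> Rabs (st_sum H g a l1 - st_sum H g a l2) <= e) ->
  exists J, HS_int_ab H g a b J.
Proof.
  intros Hab Hc.
  set (Pd := fun n (d : R -> R) => (forall x, 0 < d x) /\ forall l1 l2, fine_div d a b l1 ->
     fine_div d a b l2 -> Rabs (st_sum H g a l1 - st_sum H g a l2) <= / (INR n + 1)).
  set (dn := fun n => epsilon (inhabits (fun _ : R => 1)) (Pd n)).
  assert (Hdn : forall n, Pd n (dn n)).
  { intros n. unfold dn. apply epsilon_spec. apply Hc. apply Rinv_0_lt_compat.
    pose proof (pos_INR n). lra. }
  assert (Hpos : forall k x, 0 < dn k x) by (intros k x; apply (proj1 (Hdn k))).
  set (P := fun n => epsilon (inhabits []) (fun l => fine_div (Dl dn n) a b l)).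
  assert (HP : forall n, fine_div (Dl dn n) a b (P n)).
  { intros n. unfold P. apply epsilon_spec. apply cousin; auto. intros x; apply Dl_pos; auto. }
  assert (Hfine : forall n k, (k <= n)%nat -> fine_div (dn k) a b (P n)).
  { intros n k Hk. eapply fine_mono; [|apply HP]. intros x. apply Dl_le; auto. }
  set (s := fun n => st_sum H g a (P n)).
  assert (Hcc : Cauchy_crit s).
  { intros e He. destruct (eps_N e He) as [N HN]. exists N. intros n m Hn Hm. unfold Rdist, s.
    eapply Rle_lt_trans; [apply (proj2 (Hdn N)); apply Hfine; auto|]. apply HN; auto. }
  destruct (R_complete s Hcc) as [J HJ]. exists J.
  intros e He. destruct (eps_N (e/2)) as [N HN]; [lra|].
  exists (dn N). split; [apply Hpos|]. intros l Hl.
  destruct (HJ (e/2)) as [N1 HN1]; [lra|].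
  set (m := max N N1).
  specialize (HN1 m (Nat.le_max_r _ _)). unfold Rdist, s in HN1.
  assert (Hq : Rabs (st_sum H g a l - st_sum H g a (P m)) <= / (INR N + 1)).
  { apply (proj2 (Hdn N)); auto. apply Hfine. apply Nat.le_max_l. }
  specialize (HN N (le_n N)).
  apply Rabs_le_inv in Hq. apply Rabs_def2 in HN1. apply Rabs_def1; lra.
Qed.

Fixpoint gdiv (d a b : R) (l : list (R * R)) : Prop :=
  match l with
  | [] => a = b
  | (t, x) :: l' => a < x /\ t - d < a /\ x < t + d /\ gdiv d x b l'
  end.

Lemma fine_gdiv d a b l : fine_div (fun _ => d) a b l -> gdiv d a b l.
Proof.
  revert a; induction l as [|[t x] l IH]; simpl; intros a H; auto.
  destruct H as [? [? [? [? ?]]]]. repeat split; auto.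
Qed.

Lemma gdiv_le d a b l : gdiv d a b l -> a <= b.
Proof.
  revert a; induction l as [|[t x] l IH]; simpl; intros a H; [lra|].
  destruct H as [H1 [_ [_ H2]]]. specialize (IH _ H2). lra.
Qed.

Lemma merge H g d w : 0 <= w -> (forall s t, Rabs (s - t) < 2 * d -> Rabs (H s - H t) <= w) ->
  forall n P Q a b, (length P + length Q <= n)%nat -> gdiv d a b P -> gdiv d a b Q ->
  exists c, chain a b c /\ Rabs (st_sum H g a P - st_sum H g a Q) <= w * pv g a c.
Proof.
  intros Hw HH n. induction n as [|n IH]; intros P Q a b Hn HP HQ.
  - destruct P; [|simpl in Hn; lia]. destruct Q; [|simpl in Hn; lia]. simpl in *.
    exists []. simpl. split; auto. rewrite Rminus_diag, Rabs_R0; lra.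
  - destruct P as [|[t x] P']; destruct Q as [|[s y] Q'].
    + simpl in *. exists []. simpl. split; auto. rewrite Rminus_diag, Rabs_R0; lra.
    + simpl in HP, HQ. exfalso. destruct HQ as [H1 [_ [_ H4]]].
      pose proof (gdiv_le _ _ _ _ H4). lra.
    + simpl in HP, HQ. exfalso. destruct HP as [H1 [_ [_ H4]]].
      pose proof (gdiv_le _ _ _ _ H4). lra.
    + simpl in HP, HQ. destruct HP as [Ha1 [Ha2 [Ha3 Ha4]]].
      destruct HQ as [Hb1 [Hb2 [Hb3 Hb4]]].
      assert (Hts : Rabs (H t - H s) <= w) by (apply HH; apply Rabs_def1; lra).
      simpl in Hn.
      destruct (Rtotal_order x y) as [Hxy|[<-|Hxy]].
      * destruct (IH P' ((s,y)::Q') x b ltac:(simpl; lia) Ha4) as [c [Hc Hb]].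
        { simpl. split; [lra|]. split; [lra|]. split; [lra|exact Hb4]. }
        exists (x :: c). split; [simpl; auto|]. simpl. simpl in Hb.
        replace (H t * (g x - g a) + st_sum H g x P' - (H s * (g y - g a) + st_sum H g y Q'))
          with ((H t - H s) * (g x - g a) + (st_sum H g x P' - (H s * (g y - g x) + st_sum H g y Q'))) by ring.
        eapply Rle_trans; [apply Rabs_triang|]. rewrite Rabs_mult.
        assert (Rabs (H t - H s) * Rabs (g x - g a) <= w * Rabs (g x - g a))
          by (apply Rmult_le_compat_r; [apply Rabs_pos|auto]).
        lra.
      * destruct (IH P' Q' x b ltac:(simpl; lia) Ha4 Hb4) as [c [Hc Hb]].
        exists (x :: c). split; [simpl; auto|]. simpl.
        replace (H t * (g x - g a) + st_sum H g x P' - (H s * (g x - g a) + st_sum H g x Q'))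
          with ((H t - H s) * (g x - g a) + (st_sum H g x P' - st_sum H g x Q')) by ring.
        eapply Rle_trans; [apply Rabs_triang|]. rewrite Rabs_mult.
        assert (Rabs (H t - H s) * Rabs (g x - g a) <= w * Rabs (g x - g a))
          by (apply Rmult_le_compat_r; [apply Rabs_pos|auto]).
        lra.
      * destruct (IH ((t,x)::P') Q' y b ltac:(simpl; lia)) as [c [Hc Hb]]; [| exact Hb4 |].
        { simpl. split; [lra|]. split; [lra|]. split; [lra|exact Ha4]. }
        exists (y :: c). split; [simpl; auto|]. simpl. simpl in Hb.
        replace (H t * (g x - g a) + st_sum H g x P' - (H s * (g y - g a) + st_sum H g y Q'))
          with ((H t - H s) * (g y - g a) + ((H t * (g x - g y) + st_sum H g x P') - st_sum H g y Q')) by ring.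
        eapply Rle_trans; [apply Rabs_triang|]. rewrite Rabs_mult.
        assert (Rabs (H t - H s) * Rabs (g y - g a) <= w * Rabs (g y - g a))
          by (apply Rmult_le_compat_r; [apply Rabs_pos|auto]).
        lra.
Qed.

Definition UC (H : R -> R) := forall e, 0 < e -> exists d, 0 < d /\
  forall s t, Rabs (s - t) < d -> Rabs (H s - H t) <= e.

Lemma HS_ab_exists H g a b : BV g -> UC H -> a <= b -> exists J, HS_int_ab H g a b J.
Proof.
  intros Hg HU Hab. apply HS_ab_cauchy; auto. intros e He.
  pose proof (Var_nonneg g Hg) as HV.
  set (w := e / (Var g + 1)).
  assert (Hw : 0 < w) by (unfold w; apply Rdiv_lt_0_compat; lra).
  destruct (HU w Hw) as [d [Hd HH]].
  exists (fun _ => d / 2). split; [intros; lra|]. intros l1 l2 H1 H2.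
  destruct (merge H g (d/2) w ltac:(lra) ltac:(intros s t Hst; apply HH; lra)
     (length l1 + length l2) l1 l2 a b (le_n _) (fine_gdiv _ _ _ _ H1) (fine_gdiv _ _ _ _ H2))
     as [c [Hc Hb]].
  pose proof (pv_le_Var g a b c Hg Hc).
  assert (w * pv g a c <= w * Var g) by (apply Rmult_le_compat_l; lra).
  assert (w * Var g <= e).
  { unfold w. replace (e / (Var g + 1) * Var g) with (e - e / (Var g + 1)) by (field; lra).
    assert (0 < e / (Var g + 1)) by (apply Rdiv_lt_0_compat; lra). lra. }
  lra.
Qed.
Lemma Rabs_ge_neg x : - x <= Rabs x.
Proof. rewrite <- Rabs_Ropp. apply Rle_abs. Qed.

Lemma HS_exists H g B : BV g -> UC H -> (forall t, Rabs (H t) <= B) -> exists I, HS_int H g I.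
Proof.
  intros Hg HU HB.
  assert (HB0 : 0 <= B) by (specialize (HB 0); pose proof (Rabs_pos (H 0)); lra).
  set (Jf := fun a b => epsilon (inhabits 0) (HS_int_ab H g a b)).
  assert (HJf : forall a b, a <= b -> HS_int_ab H g a b (Jf a b)).
  { intros a b Hab. unfold Jf. apply epsilon_spec. apply HS_ab_exists; auto. }
  assert (Hdiff : forall a' a b b', a' <= a -> a <= b -> b <= b' -> forall e, 0 < e ->
     exists c1 c3, chain a' a c1 /\ chain b b' c3 /\
       Rabs (Jf a' b' - Jf a b) <= B * (pv g a' c1 + pv g b c3) + e).
  { intros a' a b b' H1 H2 H3 e He.
    destruct (HJf a' b' ltac:(lra) (e/2) ltac:(lra)) as [d1 [Hd1 Hl1]].
    destruct (HJf a b H2 (e/2) ltac:(lra)) as [d2 [Hd2 Hl2]].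
    set (d := fun x => Rmin (d1 x) (d2 x)).
    assert (Hd : forall x, 0 < d x) by (intros; apply Rmin_glb_lt; auto).
    destruct (cousin d a' a Hd H1) as [P1 HP1].
    destruct (cousin d a b Hd H2) as [P2 HP2].
    destruct (cousin d b b' Hd H3) as [P3 HP3].
    exists (map snd P1), (map snd P3).
    split; [eapply fine_chain; eauto|]. split; [eapply fine_chain; eauto|].
    assert (Hf : fine_div d a' b' (P1 ++ P2 ++ P3))
      by (eapply fine_app; [exact HP1|]; eapply fine_app; eauto).
    specialize (Hl1 _ (fine_mono _ _ _ _ _ (fun x => Rmin_l _ _) Hf)).
    specialize (Hl2 _ (fine_mono _ _ _ _ _ (fun x => Rmin_r _ _) HP2)).
    rewrite st_sum_app, (fine_endp _ _ _ _ HP1), st_sum_app, (fine_endp _ _ _ _ HP2) in Hl1.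
    pose proof (st_bound H g d a' a P1 B HP1 (fun t _ => HB t)) as B1.
    pose proof (st_bound H g d b b' P3 B HP3 (fun t _ => HB t)) as B3.
    apply Rabs_le_inv in B1; apply Rabs_le_inv in B3.
    apply Rabs_def2 in Hl1; apply Rabs_def2 in Hl2. apply Rabs_le. lra. }
  assert (Hcl : forall eta, 0 < eta -> exists T, forall a' a b b', a' <= a -> a <= b -> b <= b' ->
            a <= - T -> T <= b -> Rabs (Jf a' b' - Jf a b) <= 2 * B * eta).
  { intros eta Heta. destruct (tail_var g eta Hg Heta) as [T [HT1 HT2]]. exists T.
    intros a' a b b' H1 H2 H3 H4 H5. apply le_eps. intros e He.
    destruct (Hdiff a' a b b' H1 H2 H3 e He) as [c1 [c3 [Hc1 [Hc3 Hb]]]].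
    specialize (HT2 _ _ _ Hc1 H4). specialize (HT1 _ _ _ Hc3 H5).
    assert (B * (pv g a' c1 + pv g b c3) <= B * (2 * eta)) by (apply Rmult_le_compat_l; lra).
    lra. }
  set (u := fun n => Jf (- INR n) (INR n)).
  assert (Hcc : Cauchy_crit u).
  { intros e He. set (eta := e / (2 * (B + 1))).
    assert (Heta : 0 < eta) by (unfold eta; apply Rdiv_lt_0_compat; lra).
    assert (Hbe : 2 * B * eta < e).
    { unfold eta. replace (2 * B * (e / (2 * (B + 1)))) with (e - e / (B + 1)) by (field; lra).
      assert (0 < e / (B + 1)) by (apply Rdiv_lt_0_compat; lra). lra. }
    destruct (Hcl eta Heta) as [T HT]. destruct (INR_unbounded (Rabs T)) as [N HN].
    pose proof (Rle_abs T). pose proof (Rabs_ge_neg T).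
    exists N. intros n m Hn Hm. apply le_INR in Hn. apply le_INR in Hm. unfold Rdist, u.
    destruct (Nat.le_ge_cases n m) as [Hnm|Hnm]; apply le_INR in Hnm.
    - rewrite Rabs_minus_sym. eapply Rle_lt_trans; [|exact Hbe]. apply HT; lra.
    - eapply Rle_lt_trans; [|exact Hbe]. apply HT; lra. }
  destruct (R_complete u Hcc) as [I HI]. exists I.
  intros e He. set (eta := e / (4 * (B + 1))).
  assert (Heta : 0 < eta) by (unfold eta; apply Rdiv_lt_0_compat; lra).
  assert (Hbe : 2 * B * eta < e / 2).
  { unfold eta. replace (2 * B * (e / (4 * (B + 1)))) with (e / 2 - e / (2 * (B + 1))) by (field; lra).
    assert (0 < e / (2 * (B + 1))) by (apply Rdiv_lt_0_compat; lra). lra. }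
  destruct (Hcl eta Heta) as [T HT]. destruct (HI (e/2)) as [N1 HN1]; [lra|].
  pose proof (Rle_abs T). pose proof (Rabs_ge_neg T).
  exists (Rabs T + 1). intros a b Ha Hb. exists (Jf a b). split; [apply HJf; lra|].
  destruct (INR_unbounded (Rabs a + Rabs b)) as [Nb HNb].
  set (m := max N1 Nb). pose proof (le_INR _ _ (Nat.le_max_r N1 Nb)) as Hm.
  specialize (HN1 m (Nat.le_max_l _ _)). unfold Rdist, u in HN1.
  pose proof (Rle_abs a). pose proof (Rabs_ge_neg a). pose proof (Rle_abs b). pose proof (Rabs_ge_neg b).
  pose proof (Rabs_pos a). pose proof (Rabs_pos b).
  assert (Hq : Rabs (Jf (- INR m) (INR m) - Jf a b) <= 2 * B * eta) by (apply HT; fold m in Hm; lra).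
  apply Rabs_le_inv in Hq. apply Rabs_def2 in HN1. apply Rabs_def1; lra.
Qed.
Lemma HS_diff_bound H1 H2 g I1 I2 K : BV g -> HS_int H1 g I1 -> HS_int H2 g I2 ->
  (forall t, Rabs (H1 t - H2 t) <= K) -> Rabs (I1 - I2) <= K * Var g.
Proof.
  intros Hg HI1 HI2 HK.
  assert (HK0 : 0 <= K) by (specialize (HK 0); pose proof (Rabs_pos (H1 0 - H2 0)); lra).
  apply le_eps. intros e He.
  destruct (HI1 (e/4) ltac:(lra)) as [M1 HM1]. destruct (HI2 (e/4) ltac:(lra)) as [M2 HM2].
  set (T := Rabs M1 + Rabs M2 + 1).
  pose proof (Rle_abs M1). pose proof (Rle_abs M2). pose proof (Rabs_ge_neg M1). pose proof (Rabs_ge_neg M2).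
  destruct (HM1 (- T) T ltac:(unfold T; lra) ltac:(unfold T; lra)) as [J1 [HJ1 HJ1']].
  destruct (HM2 (- T) T ltac:(unfold T; lra) ltac:(unfold T; lra)) as [J2 [HJ2 HJ2']].
  destruct (HJ1 (e/4) ltac:(lra)) as [d1 [Hd1 Hl1]]. destruct (HJ2 (e/4) ltac:(lra)) as [d2 [Hd2 Hl2]].
  destruct (cousin (fun x => Rmin (d1 x) (d2 x)) (- T) T) as [l Hl].
  { intros x. apply Rmin_glb_lt; auto. } { unfold T; pose proof (Rabs_pos M1); pose proof (Rabs_pos M2); lra. }
  specialize (Hl1 l (fine_mono _ _ _ _ _ (fun x => Rmin_l _ _) Hl)).
  specialize (Hl2 l (fine_mono _ _ _ _ _ (fun x => Rmin_r _ _) Hl)).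
  pose proof (st_bound (fun t => H1 t - H2 t) g _ _ _ l K Hl (fun t _ => HK t)) as Hb.
  rewrite <- st_sum_sub in Hb.
  pose proof (pv_le_Var g _ _ _ Hg (fine_chain _ _ _ _ Hl)).
  assert (K * pv g (- T) (map snd l) <= K * Var g) by (apply Rmult_le_compat_l; lra).
  apply Rabs_le_inv in Hb. apply Rabs_def2 in Hl1, Hl2, HJ1', HJ2'. apply Rabs_le. lra.
Qed.

Lemma decomp H g c I t0 B1 B2 K : BV g -> HS_int H g I ->
  (forall y, y <= t0 -> Rabs (H y) <= B1) -> (forall y, t0 <= y -> Rabs (c - H y) <= B2) ->
  (forall a1 b1 p1 a2 b2 p2, chain a1 b1 p1 -> chain a2 b2 p2 -> b1 <= t0 -> t0 <= a2 ->
      B1 * pv g a1 p1 + B2 * pv g a2 p2 <= K) ->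
  Rabs (c * lim_pinf g - I - c * g t0) <= K.
Proof.
  intros Hg HI HB1 HB2 HK.
  destruct (BV_tends g Hg) as [Hgp _]. set (G := lim_pinf g) in *.
  apply le_eps. intros e He.
  set (eta := e / (Rabs c + 3)).
  pose proof (Rabs_pos c).
  assert (Heta : 0 < eta) by (unfold eta; apply Rdiv_lt_0_compat; lra).
  assert (Hce : (Rabs c + 2) * eta <= e).
  { unfold eta. replace ((Rabs c + 2) * (e / (Rabs c + 3))) with (e - e / (Rabs c + 3)) by (field; lra).
    assert (0 < e / (Rabs c + 3)) by (apply Rdiv_lt_0_compat; lra). lra. }
  destruct (HI eta Heta) as [M HM]. destruct (Hgp eta Heta) as [Mg HMg].
  pose proof (Rle_abs M). pose proof (Rabs_ge_neg M). pose proof (Rle_abs Mg). pose proof (Rabs_ge_neg Mg).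
  pose proof (Rle_abs t0). pose proof (Rabs_ge_neg t0).
  set (a := - (Rabs M + Rabs t0 + 1)). set (b := Rabs M + Rabs Mg + Rabs t0 + 1).
  destruct (HM a b ltac:(unfold a; lra) ltac:(unfold b; pose proof (Rabs_pos Mg); pose proof (Rabs_pos t0); lra)) as [J [HJ HJI]].
  specialize (HMg b ltac:(unfold b; pose proof (Rabs_pos M); pose proof (Rabs_pos t0); lra)).
  destruct (HJ eta Heta) as [d [Hd Hl]].
  destruct (cousin d a t0 Hd ltac:(unfold a; pose proof (Rabs_pos M); lra)) as [P1 HP1].
  destruct (cousin d t0 b Hd ltac:(unfold b; pose proof (Rabs_pos M); pose proof (Rabs_pos Mg); lra)) as [P2 HP2].
  specialize (Hl _ (fine_app _ _ _ _ _ _ HP1 HP2)).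
  rewrite st_sum_app, (fine_endp _ _ _ _ HP1) in Hl.
  pose proof (st_bound H g d a t0 P1 B1 HP1 (fun t Ht => HB1 t (proj2 Ht))) as S1.
  pose proof (st_bound (fun t => c - H t) g d t0 b P2 B2 HP2 (fun t Ht => HB2 t (proj1 Ht))) as S2.
  rewrite st_sum_lin, (fine_endp _ _ _ _ HP2) in S2.
  pose proof (HK _ _ _ _ _ _ (fine_chain _ _ _ _ HP1) (fine_chain _ _ _ _ HP2) (Rle_refl t0) (Rle_refl t0)) as HKK.
  assert (Hcg : Rabs (c * (G - g b)) <= Rabs c * eta).
  { rewrite Rabs_mult. apply Rmult_le_compat_l; auto. rewrite Rabs_minus_sym. lra. }
  apply Rabs_le_inv in S1, S2, Hcg. apply Rabs_def2 in Hl, HJI.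
  apply Rabs_le. nra.
Qed.
Fixpoint refl (x a : R) (l : list (R * R)) : list (R * R) :=
  match l with [] => [] | (t, y) :: l' => refl x y l' ++ [(x - t, x - a)] end.

Lemma refl_fine d x a b l : fine_div (fun u => d (x - u)) a b l -> fine_div d (x - b) (x - a) (refl x a l).
Proof.
  revert a; induction l as [|[t y] l IH]; simpl; intros a H.
  - subst. auto.
  - destruct H as [H1 [H2 [H3 [H4 H5]]]]. eapply fine_app; [apply IH; exact H5|]. simpl.
    split; [lra|]. split; [lra|]. split; [lra|]. split; [lra|]. reflexivity.
Qed.

Lemma refl_endp x a l : endp (x - endp a l) (refl x a l) = x - a.
Proof.
  revert a; induction l as [|[t y] l IH]; simpl; intros a; auto. rewrite endp_app, IH. reflexivity.
Qed.

Lemma refl_sum H g x a l :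
  st_sum (fun t => H (x - t)) g (x - endp a l) (refl x a l) = - st_sum H (fun u => g (x - u)) a l.
Proof.
  revert a; induction l as [|[t y] l IH]; simpl; intros a; [ring|].
  rewrite st_sum_app, IH, (refl_endp x y l). simpl. replace (x - (x - t)) with t by ring. ring.
Qed.

Lemma HS_refl H g c x I : BV g -> HS_int (fun y => c - H (x - y)) g I ->
  HS_int H (fun u => g (x - u)) (I - c * (lim_pinf g - lim_minf g)).
Proof.
  intros Hg HI. destruct (BV_tends g Hg) as [Hgp Hgm].
  set (Gp := lim_pinf g) in *. set (Gm := lim_minf g) in *.
  intros e He. pose proof (Rabs_pos c).
  set (eta := e / (4 * (Rabs c + 1))).
  assert (Heta : 0 < eta) by (unfold eta; apply Rdiv_lt_0_compat; lra).
  assert (Hce : 2 * Rabs c * eta < e / 2).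
  { unfold eta. replace (2 * Rabs c * (e / (4 * (Rabs c + 1)))) with (e / 2 - e / (2 * (Rabs c + 1))) by (field; lra).
    assert (0 < e / (2 * (Rabs c + 1))) by (apply Rdiv_lt_0_compat; lra). lra. }
  destruct (HI (e/2) ltac:(lra)) as [M HM].
  destruct (Hgp eta Heta) as [Tp HTp]. destruct (Hgm eta Heta) as [Tm HTm].
  pose proof (Rle_abs M). pose proof (Rabs_ge_neg M). pose proof (Rle_abs x). pose proof (Rabs_ge_neg x).
  pose proof (Rle_abs Tp). pose proof (Rabs_ge_neg Tp). pose proof (Rle_abs Tm). pose proof (Rabs_ge_neg Tm).
  exists (Rabs M + Rabs x + Rabs Tp + Rabs Tm + 1). intros a2 b2 Ha2 Hb2.
  set (a := x - b2). set (b := x - a2).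
  destruct (HM a b ltac:(unfold a; lra) ltac:(unfold b; lra)) as [J [HJ HJI]].
  specialize (HTp b ltac:(unfold b; lra)). specialize (HTm a ltac:(unfold a; lra)).
  exists (J - c * (g b - g a)). split.
  - intros e' He'. destruct (HJ e' He') as [d [Hd Hl]].
    exists (fun u => d (x - u)). split; [intros; apply Hd|]. intros l2 Hl2.
    pose proof (refl_fine d x a2 b2 l2 Hl2) as HR. specialize (Hl _ HR).
    pose proof (st_sum_lin (fun y => H (x - y)) g c a (refl x a2 l2)) as E. cbv beta in E.
    rewrite E in Hl. clear E.
    pose proof (refl_endp x a2 l2) as E. rewrite (fine_endp _ _ _ _ Hl2) in E. fold a in E.
    rewrite E in Hl. clear E.
    pose proof (refl_sum H g x a2 l2) as E. rewrite (fine_endp _ _ _ _ Hl2) in E. fold a in E.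
    rewrite E in Hl. fold b in Hl. apply Rabs_def2 in Hl. apply Rabs_def1; lra.
  - assert (Hcg : Rabs (c * (g b - Gp)) + Rabs (c * (g a - Gm)) <= 2 * Rabs c * eta).
    { rewrite !Rabs_mult.
      assert (Rabs c * Rabs (g b - Gp) <= Rabs c * eta) by (apply Rmult_le_compat_l; lra).
      assert (Rabs c * Rabs (g a - Gm) <= Rabs c * eta) by (apply Rmult_le_compat_l; lra). lra. }
    pose proof (Rabs_pos (c * (g b - Gp))). pose proof (Rabs_pos (c * (g a - Gm))).
    pose proof (Rle_abs (c * (g b - Gp))). pose proof (Rabs_ge_neg (c * (g b - Gp))).
    pose proof (Rle_abs (c * (g a - Gm))). pose proof (Rabs_ge_neg (c * (g a - Gm))).
    apply Rabs_def2 in HJI. apply Rabs_def1; nra.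
Qed.

Definition shiftl (z : R) (l : list (R * R)) := map (fun p => (fst p + z, snd p + z)) l.

Lemma shift_fine d z a b l : fine_div (fun u => d (u + z)) a b l -> fine_div d (a + z) (b + z) (shiftl z l).
Proof.
  revert a; induction l as [|[t y] l IH]; simpl; intros a H.
  - subst. auto.
  - destruct H as [H1 [H2 [H3 [H4 H5]]]].
    split; [lra|]. split; [lra|]. split; [lra|]. split; [lra|]. apply IH; auto.
Qed.

Lemma shift_sum H g z a l :
  st_sum H g (a + z) (shiftl z l) = st_sum (fun t => H (t + z)) (fun t => g (t + z)) a l.
Proof.
  revert a; induction l as [|[t y] l IH]; simpl; intros a; auto. rewrite IH. reflexivity.
Qed.

Lemma HS_shift H G z I : HS_int (fun t => H (t + z)) (fun t => G (t + z)) I -> HS_int H G I.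
Proof.
  intros HI e He. destruct (HI e He) as [M HM].
  pose proof (Rle_abs M). pose proof (Rabs_ge_neg M). pose proof (Rle_abs z). pose proof (Rabs_ge_neg z).
  exists (Rabs M + Rabs z + 1). intros a2 b2 Ha2 Hb2.
  destruct (HM (a2 + - z) (b2 + - z) ltac:(lra) ltac:(lra)) as [J [HJ HJI]].
  exists J. split; auto. intros e' He'. destruct (HJ e' He') as [d [Hd Hl]].
  exists (fun u => d (u + - z)). split; [intros; apply Hd|]. intros l2 Hl2.
  pose proof (shift_fine d (- z) a2 b2 l2 Hl2) as HS. specialize (Hl _ HS).
  rewrite shift_sum in Hl. cbv beta in Hl.
  assert (E1 : (fun t => H (t + - z + z)) = H) by (apply functional_extensionality; intros; f_equal; ring).
  assert (E2 : (fun t => G (t + - z + z)) = G) by (apply functional_extensionality; intros; f_equal; ring).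
  rewrite E1, E2 in Hl. exact Hl.
Qed.
Lemma BC_lims F : in_BC F -> exists L, tends_pinf F L /\ lim_pinf F = L /\ tends_minf F 0 /\ lim_minf F = 0.
Proof.
  intros [Hc [Hm [L Hp]]]. exists L. repeat split; auto.
  - apply lim_pinf_eq; auto.
  - apply lim_minf_eq; auto.
Qed.

Lemma BC_UC F : in_BC F -> UC F.
Proof.
  intros HF. destruct (BC_lims F HF) as [L [Hp [_ [Hm _]]]]. destruct HF as [Hc _].
  intros e He.
  destruct (Hm (e/2) ltac:(lra)) as [M1 HM1]. destruct (Hp (e/2) ltac:(lra)) as [M2 HM2].
  set (A := Rabs M1 + Rabs M2 + 2).
  pose proof (Rle_abs M1). pose proof (Rabs_ge_neg M1). pose proof (Rle_abs M2). pose proof (Rabs_ge_neg M2).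
  pose proof (Heine F (fun c => - A <= c <= A) (compact_P3 (- A) A) (fun x _ => Hc x)) as HU.
  destruct (HU (mkposreal e He)) as [d0 Hd0]. simpl in Hd0.
  pose proof (cond_pos d0) as Hd0p.
  exists (Rmin d0 1). split; [apply Rmin_glb_lt; lra|]. intros s t Hst.
  pose proof (Rmin_l d0 1). pose proof (Rmin_r d0 1).
  apply Rabs_def2 in Hst.
  destruct (Rle_dec s A) as [HsA|HsA]; destruct (Rle_dec (- A) s) as [HsA'|HsA'];
  destruct (Rle_dec t A) as [HtA|HtA]; destruct (Rle_dec (- A) t) as [HtA'|HtA'];
  try (left; apply Hd0; [lra|lra|apply Rabs_def1; lra]);
  first
  [ assert (Hs2 : Rabs (F s - L) < e/2) by (apply HM2; unfold A in *; lra);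
    assert (Ht2 : Rabs (F t - L) < e/2) by (apply HM2; unfold A in *; lra);
    apply Rabs_def2 in Hs2, Ht2; apply Rabs_le; lra
  | assert (Hs2 : Rabs (F s - 0) < e/2) by (apply HM1; unfold A in *; lra);
    assert (Ht2 : Rabs (F t - 0) < e/2) by (apply HM1; unfold A in *; lra);
    apply Rabs_def2 in Hs2, Ht2; apply Rabs_le; lra ].
Qed.

Lemma BC_bounded F : in_BC F -> exists K, forall u, Rabs (F u) <= K.
Proof.
  intros HF. destruct (BC_lims F HF) as [L [Hp [_ [Hm _]]]]. destruct HF as [Hc _].
  destruct (Hm 1 ltac:(lra)) as [M1 HM1]. destruct (Hp 1 ltac:(lra)) as [M2 HM2].
  set (A := Rabs M1 + Rabs M2 + 1).
  pose proof (Rle_abs M1). pose proof (Rabs_ge_neg M1). pose proof (Rle_abs M2). pose proof (Rabs_ge_neg M2).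
  pose proof (Rabs_pos M1). pose proof (Rabs_pos M2).
  destruct (continuity_ab_maj F (- A) A ltac:(unfold A; lra) (fun c _ => Hc c)) as [xM [HxM _]].
  destruct (continuity_ab_min F (- A) A ltac:(unfold A; lra) (fun c _ => Hc c)) as [xm [Hxm _]].
  exists (Rabs (F xM) + Rabs (F xm) + Rabs L + 1). intros u.
  pose proof (Rabs_pos (F xM)). pose proof (Rabs_pos (F xm)). pose proof (Rabs_pos L).
  destruct (Rle_dec u A) as [Hu1|Hu1]; destruct (Rle_dec (- A) u) as [Hu2|Hu2].
  - specialize (HxM u ltac:(lra)). specialize (Hxm u ltac:(lra)).
    pose proof (Rle_abs (F xM)). pose proof (Rabs_ge_neg (F xm)). apply Rabs_le. lra.
  - specialize (HM1 u ltac:(unfold A in *; lra)). apply Rabs_def2 in HM1. apply Rabs_le. lra.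
  - specialize (HM2 u ltac:(unfold A in *; lra)). apply Rabs_def2 in HM2.
    pose proof (Rle_abs L). pose proof (Rabs_ge_neg L). apply Rabs_le. lra.
  - unfold A in *; lra.
Qed.

Lemma alex_ge F a b : in_BC F -> ERle a b -> Rabs (ext F b - ext F a) <= alex_norm F.
Proof.
  intros HF Hab. destruct (BC_bounded F HF) as [K HK].
  destruct (BC_lims F HF) as [L [_ [HL [_ Hl0]]]].
  assert (Hext : forall e, Rabs (ext F e) <= K + Rabs L).
  { pose proof (HK 0); pose proof (Rabs_pos L); pose proof (Rabs_pos (F 0)).
    intros [r| |]; simpl.
    - pose proof (HK r); lra.
    - rewrite HL; lra.
    - rewrite Hl0, Rabs_R0; lra. }
  unfold alex_norm. apply sup_R_spec.
  - exists 0, MInf, MInf. simpl. split; auto. rewrite Rminus_diag, Rabs_R0. reflexivity.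
  - exists (2 * (K + Rabs L)). intros v [a' [b' [_ ->]]].
    eapply Rle_trans; [apply Rabs_triang|]. rewrite Rabs_Ropp.
    pose proof (Hext a'). pose proof (Hext b'). lra.
  - exists a, b. auto.
Qed.
Theorem theorem2p1 (F g : R -> R) (hF : in_BC F) (hg : BV g) :
  (* (a) *)
  (forall x, exists I, HS_int (fun y => lim_pinf F - F (x - y)) g I) /\
  (* (b) *)
  (forall x, conv F g x = conv_r F g x) /\
  (* (c) *)
  (sup_norm (conv F g)
     <= Rabs (lim_pinf F - lim_minf F) * inf_R (fun v => exists x, v = Rabs (g x))
        + alex_norm F * Var g /\
   Rabs (lim_pinf F - lim_minf F) * inf_R (fun v => exists x, v = Rabs (g x))
        + alex_norm F * Var g <= alex_norm F * BV_norm g) /\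
  (* (d) *)
  (continuity (conv F g) /\
   tends_pinf (conv F g) (lim_pinf g * (lim_pinf F - lim_minf F)) /\
   tends_minf (conv F g) (lim_minf g * (lim_pinf F - lim_minf F))) /\
  (* (f) *)
  (forall x z,
     conv F g (x - z) = conv (fun y => F (y - z)) g x /\
     conv (fun y => F (y - z)) g x = conv F (fun y => g (y - z)) x).
Proof.
  destruct (BC_lims F hF) as [L [HFp [HLp [HFm HLm]]]].
  rewrite HLp, HLm, Rminus_0_r.
  assert (HN1 : forall u, Rabs (F u) <= alex_norm F).
  { intros u. pose proof (alex_ge F MInf (Fin u) hF I) as H. simpl in H.
    rewrite HLm, Rminus_0_r in H. exact H. }
  assert (HN2 : forall u, Rabs (L - F u) <= alex_norm F).
  { intros u. pose proof (alex_ge F (Fin u) PInf hF I) as H. simpl in H.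
    rewrite HLp in H. exact H. }
  assert (HN3 : Rabs L <= alex_norm F).
  { pose proof (alex_ge F MInf PInf hF I) as H. simpl in H.
    rewrite HLp, HLm, Rminus_0_r in H. exact H. }
  set (N := alex_norm F) in *.
  assert (HN0 : 0 <= N) by (pose proof (Rabs_pos L); lra).
  pose proof (BC_UC F hF) as HUF.
  destruct (BV_tends g hg) as [Hgp Hgm].
  pose proof (Var_nonneg g hg) as HV0.
  assert (HlimH : forall x, lim_pinf (fun y => L - F (x - y)) = L).
  { intros x. apply lim_pinf_eq. intros e He. destruct (HFm e He) as [M HM].
    exists (x - M). intros y Hy. replace (L - F (x - y) - L) with (- (F (x - y) - 0)) by ring.
    rewrite Rabs_Ropp. apply HM. lra. }
  assert (Ha : forall x, exists I, HS_int (fun y => L - F (x - y)) g I).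
  { intros x. apply (HS_exists _ g N hg).
    - intros e He. destruct (HUF e He) as [d [Hd HH]]. exists d; split; auto. intros s t Hst.
      replace (L - F (x - s) - (L - F (x - t))) with (F (x - t) - F (x - s)) by ring.
      apply HH. replace (x - t - (x - s)) with (s - t) by ring. exact Hst.
    - intros t. apply HN2. }
  assert (Hconv : forall x I, HS_int (fun y => L - F (x - y)) g I -> conv F g x = L * lim_pinf g - I).
  { intros x I HI. unfold conv, prod_int. rewrite HLp, HlimH, (HS_integral_eq _ _ _ HI). reflexivity. }
  assert (Hdec : forall x t0, Rabs (conv F g x - L * g t0) <= N * Var g).
  { intros x t0. destruct (Ha x) as [I HI]. rewrite (Hconv x I HI).
    apply (decomp _ g L I t0 N N (N * Var g) hg HI).
    - intros y _. apply HN2.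
    - intros y _. replace (L - (L - F (x - y))) with (F (x - y)) by ring. apply HN1.
    - intros a1 b1 p1 a2 b2 p2 H1 H2 H3 H4.
      pose proof (pv2_le_Var g _ _ _ _ _ _ hg H1 H2 ltac:(lra)).
      rewrite <- Rmult_plus_distr_l. apply Rmult_le_compat_l; auto. }
  set (iq := inf_R (fun v => exists x, v = Rabs (g x))).
  assert (Eiq : iq = - sup_R (fun y => exists x, - y = Rabs (g x))) by reflexivity.
  assert (Hlub : is_lub (fun y => exists x, - y = Rabs (g x)) (sup_R (fun y => exists x, - y = Rabs (g x)))).
  { apply sup_R_spec.
    - exists (- Rabs (g 0)), 0. ring.
    - exists 0. intros y [x Hx]. pose proof (Rabs_pos (g x)). lra. }
  assert (Hi1 : forall x, iq <= Rabs (g x)).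
  { intros x. rewrite Eiq. assert (- Rabs (g x) <= sup_R (fun y => exists x, - y = Rabs (g x))).
    { apply (proj1 Hlub). exists x. ring. } lra. }
  assert (Hi0 : 0 <= iq).
  { rewrite Eiq. assert (sup_R (fun y => exists x, - y = Rabs (g x)) <= 0); [|lra].
    apply (proj2 Hlub). intros y [x Hx]. pose proof (Rabs_pos (g x)). lra. }
  assert (Hi2 : forall e, 0 < e -> exists x, Rabs (g x) < iq + e).
  { intros e He. destruct (lub_approx _ _ e Hlub He) as [y [[x Hx] Hy]]. exists x. rewrite Eiq. lra. }
  assert (Hsupb : forall x, Rabs (conv F g x) <= Rabs L * iq + N * Var g).
  { intros x. apply le_eps. intros e He. pose proof (Rabs_pos L).
    destruct (Hi2 (e / (Rabs L + 1))) as [x0 Hx0]; [apply Rdiv_lt_0_compat; lra|].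
    pose proof (Hdec x x0) as Hd. apply Rabs_le_inv in Hd.
    assert (Rabs (L * g x0) <= Rabs L * iq + Rabs L * (e / (Rabs L + 1))).
    { rewrite Rabs_mult, <- Rmult_plus_distr_l. apply Rmult_le_compat_l; lra. }
    assert (Rabs L * (e / (Rabs L + 1)) <= e).
    { replace (Rabs L * (e / (Rabs L + 1))) with (e - e / (Rabs L + 1)) by (field; lra).
      assert (0 < e / (Rabs L + 1)) by (apply Rdiv_lt_0_compat; lra). lra. }
    apply Rabs_le_inv in H0. apply Rabs_le. lra. }
  split; [exact Ha|]. split.
  { intros x. destruct (Ha x) as [I HI]. rewrite (Hconv x I HI).
    unfold conv_r, prod_int. rewrite HLp.
    pose proof (HS_refl F g L x I hg HI) as HR. rewrite (HS_integral_eq _ _ _ HR).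
    rewrite (lim_pinf_eq (fun y => g (x - y)) (lim_minf g)). ring.
    intros e He. destruct (Hgm e He) as [M HM]. exists (x - M). intros y Hy. apply HM. lra. }
  split.
  { split.
    - unfold sup_norm. pose proof (sup_R_spec (fun v => exists x, v = Rabs (conv F g x))) as Hs.
      destruct Hs as [_ Hs].
      + exists (Rabs (conv F g 0)), 0. reflexivity.
      + exists (Rabs L * iq + N * Var g). intros v [x ->]. apply Hsupb.
      + apply Hs. intros v [x ->]. apply Hsupb.
    - unfold BV_norm.
      assert (iq <= Rabs (lim_minf g)).
      { apply le_eps. intros e He. destruct (Hgm e He) as [M HM].
        specialize (HM (M - 1) ltac:(lra)). specialize (Hi1 (M - 1)).
        apply Rabs_def2 in HM. pose proof (Rle_abs (lim_minf g)). pose proof (Rabs_ge_neg (lim_minf g)).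
        pose proof (Rle_abs (g (M - 1))). pose proof (Rabs_ge_neg (g (M - 1))).
        unfold Rabs in *. destruct (Rcase_abs (g (M - 1))); destruct (Rcase_abs (lim_minf g)); lra. }
      pose proof (Rabs_pos L). nra. }
  split; [split; [|split]|].
  { intros x. unfold continuity_pt, continue_in, limit1_in, limit_in. simpl. unfold R_dist.
    intros e He. set (w := e / (2 * (Var g + 1))).
    assert (Hw : 0 < w) by (unfold w; apply Rdiv_lt_0_compat; lra).
    destruct (HUF w Hw) as [d [Hd HH]]. exists d. split; [lra|].
    intros x0 [_ Hx0]. destruct (Ha x) as [I HI]. destruct (Ha x0) as [I0 HI0].
    rewrite (Hconv x I HI), (Hconv x0 I0 HI0).
    assert (Hb : Rabs (I0 - I) <= w * Var g).
    { apply (HS_diff_bound _ _ g I0 I w hg HI0 HI). intros t.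
      replace (L - F (x0 - t) - (L - F (x - t))) with (F (x - t) - F (x0 - t)) by ring.
      apply HH. replace (x - t - (x0 - t)) with (- (x0 - x)) by ring. rewrite Rabs_Ropp. exact Hx0. }
    assert (w * Var g < e).
    { unfold w. replace (e / (2 * (Var g + 1)) * Var g) with (e / 2 - e / (2 * (Var g + 1))) by (field; lra).
      assert (0 < e / (2 * (Var g + 1))) by (apply Rdiv_lt_0_compat; lra). lra. }
    replace (L * lim_pinf g - I0 - (L * lim_pinf g - I)) with (- (I0 - I)) by ring.
    rewrite Rabs_Ropp. lra. }
  { intros e He. pose proof (Rabs_pos L).
    set (eta := e / (Var g + N + Rabs L + 1)).
    assert (Heta : 0 < eta) by (unfold eta; apply Rdiv_lt_0_compat; lra).
    assert (Hee : eta * (Var g + N + Rabs L) < e).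
    { unfold eta. replace (e / (Var g + N + Rabs L + 1) * (Var g + N + Rabs L)) with (e - e / (Var g + N + Rabs L + 1)) by (field; lra).
      assert (0 < e / (Var g + N + Rabs L + 1)) by (apply Rdiv_lt_0_compat; lra). lra. }
    destruct (HFp eta Heta) as [M0 HM0]. destruct (tail_var g eta hg Heta) as [T1 [HT1 _]].
    destruct (Hgp eta Heta) as [Tg HTg].
    pose proof (Rle_abs M0). pose proof (Rabs_ge_neg M0). pose proof (Rle_abs T1). pose proof (Rabs_ge_neg T1).
    pose proof (Rle_abs Tg). pose proof (Rabs_ge_neg Tg).
    exists (Rabs M0 + Rabs T1 + Rabs Tg + 1). intros x Hx.
    set (t0 := x - Rabs M0 - 1).
    destruct (Ha x) as [I HI]. rewrite (Hconv x I HI).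
    assert (Hd : Rabs (L * lim_pinf g - I - L * g t0) <= eta * Var g + N * eta).
    { apply (decomp _ g L I t0 eta N _ hg HI).
      - intros y Hy. rewrite Rabs_minus_sym. left. apply HM0. unfold t0 in Hy. lra.
      - intros y _. replace (L - (L - F (x - y))) with (F (x - y)) by ring. apply HN1.
      - intros a1 b1 p1 a2 b2 p2 Hc1 Hc2 Hc3 Hc4.
        pose proof (pv_le_Var g _ _ _ hg Hc1).
        pose proof (HT1 _ _ _ Hc2 ltac:(unfold t0 in Hc4; lra)).
        assert (eta * pv g a1 p1 <= eta * Var g) by (apply Rmult_le_compat_l; lra).
        assert (N * pv g a2 p2 <= N * eta) by (apply Rmult_le_compat_l; lra). lra. }
    specialize (HTg t0 ltac:(unfold t0; lra)).
    assert (Hlg : Rabs (L * (g t0 - lim_pinf g)) <= Rabs L * eta).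
    { rewrite Rabs_mult. apply Rmult_le_compat_l; lra. }
    apply Rabs_le_inv in Hd. apply Rabs_le_inv in Hlg. apply Rabs_def1; nra. }
  { intros e He. pose proof (Rabs_pos L).
    set (eta := e / (Var g + N + Rabs L + 1)).
    assert (Heta : 0 < eta) by (unfold eta; apply Rdiv_lt_0_compat; lra).
    assert (Hee : eta * (Var g + N + Rabs L) < e).
    { unfold eta. replace (e / (Var g + N + Rabs L + 1) * (Var g + N + Rabs L)) with (e - e / (Var g + N + Rabs L + 1)) by (field; lra).
      assert (0 < e / (Var g + N + Rabs L + 1)) by (apply Rdiv_lt_0_compat; lra). lra. }
    destruct (HFm eta Heta) as [M0 HM0]. destruct (tail_var g eta hg Heta) as [T2 [_ HT2]].
    destruct (Hgm eta Heta) as [Tg HTg].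
    pose proof (Rle_abs M0). pose proof (Rabs_ge_neg M0). pose proof (Rle_abs T2). pose proof (Rabs_ge_neg T2).
    pose proof (Rle_abs Tg). pose proof (Rabs_ge_neg Tg).
    exists (- (Rabs M0 + Rabs T2 + Rabs Tg + 2)). intros x Hx.
    set (t0 := x + Rabs M0 + 1).
    destruct (Ha x) as [I HI]. rewrite (Hconv x I HI).
    assert (Hd : Rabs (L * lim_pinf g - I - L * g t0) <= N * eta + eta * Var g).
    { apply (decomp _ g L I t0 N eta _ hg HI).
      - intros y _. apply HN2.
      - intros y Hy. replace (L - (L - F (x - y))) with (F (x - y) - 0) by ring.
        left. apply HM0. unfold t0 in Hy. lra.
      - intros a1 b1 p1 a2 b2 p2 Hc1 Hc2 Hc3 Hc4.
        pose proof (pv_le_Var g _ _ _ hg Hc2).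
        pose proof (HT2 _ _ _ Hc1 ltac:(unfold t0 in Hc3; lra)).
        assert (N * pv g a1 p1 <= N * eta) by (apply Rmult_le_compat_l; lra).
        assert (eta * pv g a2 p2 <= eta * Var g) by (apply Rmult_le_compat_l; lra). lra. }
    specialize (HTg t0 ltac:(unfold t0; lra)).
    assert (Hlg : Rabs (L * (g t0 - lim_minf g)) <= Rabs L * eta).
    { rewrite Rabs_mult. apply Rmult_le_compat_l; lra. }
    apply Rabs_le_inv in Hd. apply Rabs_le_inv in Hlg. apply Rabs_def1; nra. }
  intros x z.
  assert (HL' : lim_pinf (fun y => F (y - z)) = L).
  { apply lim_pinf_eq. intros e He. destruct (HFp e He) as [M HM]. exists (M + z).
    intros y Hy. apply HM. lra. }
  split.
  - unfold conv. rewrite HL', HLp. f_equal. apply functional_extensionality. intros y.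
    replace (x - z - y) with (x - y - z) by ring. reflexivity.
  - destruct (Ha (x - z)) as [I1 HI1].
    assert (HI2 : HS_int (fun y => L - F (x - y)) (fun y => g (y - z)) I1).
    { apply (HS_shift _ _ z). cbv beta.
      assert (E1 : (fun t => L - F (x - (t + z))) = (fun y => L - F (x - z - y)))
        by (apply functional_extensionality; intros; f_equal; f_equal; ring).
      assert (E2 : (fun t => g (t + z - z)) = g)
        by (apply functional_extensionality; intros; f_equal; ring).
      rewrite E1, E2. exact HI1. }
    unfold conv, prod_int. rewrite HL', HLp. cbv beta.
    assert (E0 : (fun y => L - F (x - y - z)) = (fun y => L - F (x - z - y)))
      by (apply functional_extensionality; intros; f_equal; f_equal; ring).
    rewrite E0, (HlimH (x - z)), (HlimH x), (HS_integral_eq _ _ _ HI1), (HS_integral_eq _ _ _ HI2).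
    rewrite (lim_pinf_eq (fun y => g (y - z)) (lim_pinf g)); [reflexivity|].
    intros e He. destruct (Hgp e He) as [M HM]. exists (M + z). intros y Hy. apply HM. lra.
Qed.
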